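(* Let $m,n,k$ be positive integers, let $X_1,\ldots,X_k$ be pairwise disjoint $2$-element subsets of $[m]$, and let $Y_1,\ldots,Y_k$ be arbitrary $2$-element subsets of $[n]$. Then the number $S_{22}(m,n,k)$ of functions $f:[m]\to[n]$ such that $f(X_i)\neq Y_i$ for $i=1,2,\ldots,k$ equals $$S_{22}(m,n,k)=\sum_{i=0}^k(-2)^i\binom{k}{i}n^{m-2i}=n^{m-2k}(n^2-2)^k.$$
   Context: $[n]=\{1,\ldots,n\}$. *)

(* Defs.v *)
From mathcomp Require Import all_boot all_order all_algebra.
Set Implicit Arguments. Unset Strict Implicit. Unset Printing Implicit Defensive.
Import Order.TTheory GRing.Theory Num.Theory.

(* [m] is modelled by 'I_m (0-based indexing), functions [m] -> [n] by
   finite functions {ffun 'I_m -> 'I_n}; f(X) is the image set f @: X. *)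
Definition S22 (m n k : nat) (X : 'I_k -> {set 'I_m}) (Y : 'I_k -> {set 'I_n}) : nat :=
  #|[set f : {ffun 'I_m -> 'I_n} | [forall i : 'I_k, f @: X i != Y i]]|.

(* Main.v *)
Require Import Defs.
From mathcomp Require Import all_boot all_order all_algebra.
From mathcomp Require Import ring zify.
Import Order.TTheory GRing.Theory Num.Theory.
Set Implicit Arguments. Unset Strict Implicit. Unset Printing Implicit Defensive.
Set Implicit Arguments. Unset Strict Implicit. Unset Printing Implicit Defensive.

Section Count.
Variables m n : nat.
Local Notation FF := {ffun 'I_m -> 'I_n}.

Definition upd (a b : 'I_m) (f : FF) (u v : 'I_n) : FF :=
  [ffun x => if x == a then u else if x == b then v else f x].

Lemma cardE' (P : pred FF) : #|[set f | P f]| = \sum_f (P f : nat).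
Proof.
rewrite -sum1_card big_mkcond /=; apply: eq_bigr => f _.
by rewrite inE; case: (P f).
Qed.

Lemma fiber_le (Q : pred FF) a b (hab : a != b)
  (HQ : forall f u v, Q (upd a b f u v) = Q f) u v u' v' :
  #|[set f | Q f && (f a == u) && (f b == v)]| <=
  #|[set f | Q f && (f a == u') && (f b == v')]|.
Proof.
set A := [set f | _].
rewrite -(@card_in_imset _ _ (fun f => upd a b f u' v') A).
  apply: subset_leq_card; apply/subsetP => g /imsetP [f fA ->].
  have hba : (b == a) = false by rewrite eq_sym (negbTE hab).
  move: fA; rewrite !inE HQ !ffunE eqxx hba eqxx.

  by rewrite !eqxx !andbT; case/andP=> /andP [-> _] _.
move=> f1 f2; rewrite !inE => /andP [/andP [_ /eqP h1a] /eqP h1b] /andP [/andP [_ /eqP h2a] /eqP h2b] e.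
apply/ffunP => x; have := congr1 (fun g : FF => g x) e; rewrite /= !ffunE.
case: eqP => [-> _|_]; first by rewrite h1a h2a.
by case: eqP => [-> _|_ //]; rewrite h1b h2b.
Qed.

Lemma fiber_eq (Q : pred FF) a b (hab : a != b)
  (HQ : forall f u v, Q (upd a b f u v) = Q f) u v u' v' :
  #|[set f | Q f && (f a == u) && (f b == v)]| =
  #|[set f | Q f && (f a == u') && (f b == v')]|.
Proof. by apply/eqP; rewrite eqn_leq !(fiber_le hab HQ). Qed.

Lemma count_total (Q : pred FF) a b :
  #|[set f | Q f]| = \sum_(u : 'I_n) \sum_(v : 'I_n) #|[set f | Q f && (f a == u) && (f b == v)]|.
Proof.
under eq_bigr do under eq_bigr do rewrite cardE'.
rewrite cardE'.
under [in RHS]eq_bigr do rewrite exchange_big /=.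
rewrite [in RHS]exchange_big /=; apply: eq_bigr => f _; symmetry.
rewrite (bigD1 (f a)) //= [X in _ + X]big1 => [|u /negbTE hu]; last first.
  by apply: big1 => v _; rewrite eq_sym hu andbF.
rewrite (bigD1 (f b)) //= [X in _ + X + _]big1 => [|v /negbTE hv]; last by rewrite eq_sym hv andbF.
by rewrite !eqxx !andbT !addn0.
Qed.

Lemma set2_eq (x y c d : 'I_n) : c != d ->
  ([set x; y] == [set c; d]) = ((x == c) && (y == d)) || ((x == d) && (y == c)).
Proof.
move=> cd; apply/eqP/idP.
  move=> e.
  have hx : x \in [set c; d] by rewrite -e set21.
  have hy : y \in [set c; d] by rewrite -e set22.
  have hc : c \in [set x; y] by rewrite e set21.
  have hd : d \in [set x; y] by rewrite e set22.
  have dc : (d == c) = false by rewrite eq_sym (negbTE cd).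
  move: hx hy hc hd; rewrite !inE.
  by do 4 case/orP=> /eqP ?; subst; rewrite ?eqxx ?(negbTE cd) ?dc ?orbT.
by case/orP => /andP [/eqP -> /eqP ->] //; apply: setUC.
Qed.


Lemma step (Q : pred FF) a b (hab : a != b)
  (HQ : forall f u v, Q (upd a b f u v) = Q f) (u0 c d : 'I_n) (cd : c != d) :
  let C := #|[set f | Q f && (f a == u0) && (f b == u0)]| in
  #|[set f | Q f && (f @: [set a; b] != [set c; d])]| + 2 * C = n * (n * C) /\
  #|[set f | Q f]| = n * (n * C).
Proof.
move=> C.
have tot : #|[set f | Q f]| = n * (n * C).
  rewrite (count_total Q a b).
  under eq_bigr do under eq_bigr do rewrite (fiber_eq hab HQ _ _ u0 u0).
  by rewrite /C; under eq_bigr do rewrite sum_nat_const card_ord; rewrite sum_nat_const card_ord.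
split => //; rewrite -tot.
have -> : 2 * C = #|[set f | Q f && (f @: [set a; b] == [set c; d])]|.
  rewrite mul2n -addnn {1}/C (fiber_eq hab HQ u0 u0 c d) /C (fiber_eq hab HQ u0 u0 d c).
  rewrite !cardE' -big_split /=; apply: eq_bigr => f _.
  rewrite imsetU1 imset_set1 set2_eq //.
  have dc : (d == c) = false by rewrite eq_sym (negbTE cd).
  case: (Q f) => //=; case: (f a =P c) => [->|_]; case: (f b =P d) => [->|_];
    rewrite ?eqxx ?(negbTE cd) ?dc //=; case: (f a == d); case: (f b == c).
rewrite !cardE' -big_split /=; apply: eq_bigr => f _.
by case: (Q f); case: (_ == _).
Qed.

End Count.
Local Open Scope ring_scope.

Lemma union_card (m k : nat) (X : 'I_k -> {set 'I_m}) :
  (forall i, #|X i| = 2%N) ->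
  (forall i j, i != j -> [disjoint X i & X j]) ->
  (2 * k <= m)%N.
Proof.
move=> hX hd.
pose U j := [set x | [exists i : 'I_k, (i < j)%N && (x \in X i)]].
have key : forall j, (j <= k)%N -> #|U j| = (2 * j)%N.
  elim=> [_|j IH hj].
    apply/eqP; rewrite cards_eq0; apply/eqP/setP => x; rewrite !inE.
    by apply/existsP => -[i].
  pose jj : 'I_k := Ordinal hj.
  have -> : U j.+1 = X jj :|: U j.
    apply/setP => x; rewrite !inE; apply/existsP/orP.
      case=> i /andP []; rewrite ltnS leq_eqVlt => /orP [/eqP ei xi|lt xi].
        by left; have -> : jj = i by apply: val_inj; rewrite /= ei.
      by right; apply/existsP; exists i; rewrite lt.
    case=> [xj|/existsP [i /andP [lt xi]]]; first by exists jj; rewrite /= ltnSn.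
    by exists i; rewrite ltnS ltnW.
  rewrite cardsU IH; last exact: ltnW. rewrite hX.
  have -> : X jj :&: U j = set0.
    apply/setP => x; rewrite !inE; apply/negbTE; apply/andP => -[xj /existsP [i /andP [lt xi]]].
    have ne : i != jj by rewrite -(inj_eq val_inj) /= neq_ltn lt.
    by rewrite (disjointFr (hd _ _ ne) xi) in xj.
  by rewrite cards0 subn0 mulnS.
have := key k (leqnn k); move=> <-.
by apply: leq_trans (max_card _) _; rewrite card_ord.
Qed.



Lemma main_count (m n k : nat) (X : 'I_k -> {set 'I_m}) (Y : 'I_k -> {set 'I_n}) :
  (forall i, #|X i| = 2%N) ->
  (forall i j, i != j -> [disjoint X i & X j]) ->
  (forall i, #|Y i| = 2%N) ->
  forall j, (j <= k)%N ->
  (#|[set f : {ffun 'I_m -> 'I_n} | [forall i : 'I_k, (i < j)%N ==> (f @: X i != Y i)]]|)%:Z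
    * (n%:Z) ^+ (2 * j) = (n%:Z) ^+ m * ((n%:Z) ^+ 2 - 2) ^+ j.
Proof.
move=> hX hd hY; elim=> [_|j IH hj].
  have -> : [set f : {ffun 'I_m -> 'I_n} | [forall i : 'I_k, (i < 0)%N ==> (f @: X i != Y i)]] = setT.
    by apply/setP => f; rewrite !inE; apply/forallP => i.
  by rewrite cardsT card_ffun !card_ord muln0 expr0 !mulr1 -natz natrX natz.
pose jj : 'I_k := Ordinal hj.
have [a [b [hab eX]]] := cards2P _ (introT eqP (hX jj)).
have [c [d [cd eY]]] := cards2P _ (introT eqP (hY jj)).
pose Q := fun f : {ffun 'I_m -> 'I_n} => [forall i : 'I_k, (i < j)%N ==> (f @: X i != Y i)].
have HQ : forall f u v, Q (upd a b f u v) = Q f.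
  move=> f u v; apply: eq_forallb => i.
  case lt: (i < j)%N => //=; congr (~~ (_ == _)); apply: eq_in_imset => x xi.
  have ne : i != jj by rewrite -(inj_eq val_inj) /= neq_ltn lt.
  have xj := disjointFr (hd _ _ ne) xi.
  have xa : (x == a) = false by apply/negbTE; apply: contraFneq xj => ->; rewrite eX set21.
  have xb : (x == b) = false by apply/negbTE; apply: contraFneq xj => ->; rewrite eX set22.
  by rewrite ffunE xa xb.
have [e1 e2] := step hab HQ c cd.
set C := #|[set f | Q f && (f a == c) && (f b == c)]| in e1 e2.
have -> : [set f : {ffun 'I_m -> 'I_n} | [forall i : 'I_k, (i < j.+1)%N ==> (f @: X i != Y i)]]
   = [set f | Q f && (f @: [set a; b] != [set c; d])].
  apply/setP => f; rewrite !inE -eX -eY; apply/forallP/andP.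
    move=> H; split.
      by apply/forallP => i; apply/implyP => lt; apply: (implyP (H i)); rewrite ltnW.
    by apply: (implyP (H jj)) => /=.
  case=> /forallP H Hj i; apply/implyP; rewrite ltnS leq_eqVlt => /orP [/eqP ei|lt].
    by have -> : i = jj by apply: val_inj; rewrite /= ei.
  exact: (implyP (H i)).
move: IH; rewrite -/Q e2 => /(_ (ltnW hj)) IH.
have e1' : (#|[set f | Q f && (f @: [set a; b] != [set c; d])]|)%:Z = (n%:Z ^+ 2 - 2) * C%:Z.
  apply: (addIr (2 * C%:Z)); rewrite mulrBl addrNK.
  have := congr1 (fun x : nat => x%:Z) e1; rewrite /= PoszD !PoszM => ->; ring.
rewrite e1'.
transitivity ((n%:Z ^+ 2 - 2) * ((n%:Z) ^+ m * (n%:Z ^+ 2 - 2) ^+ j)); last by rewrite (exprS (n%:Z ^+ 2 - 2) j); ring.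
rewrite -IH !PoszM mulnS exprD; ring.
Qed.

Theorem corollary5 (m n k : nat) (X : 'I_k -> {set 'I_m}) (Y : 'I_k -> {set 'I_n}) :
  (0 < m)%N -> (0 < n)%N -> (0 < k)%N ->
  (forall i, #|X i| = 2%N) ->
  (forall i j, i != j -> [disjoint X i & X j]) ->
  (forall i, #|Y i| = 2%N) ->
  (S22 X Y)%:Z = \sum_(i < k.+1) (-2) ^+ i * ('C(k, i))%:Z * (n%:Z) ^+ (m - 2 * i)
  /\ (S22 X Y)%:Z = (n%:Z) ^+ (m - 2 * k) * ((n%:Z) ^+ 2 - 2) ^+ k.
Proof.
move=> hm hn hk hX hd hY.
have hmk := @union_card m k X hX hd.
have h := @main_count m n k X Y hX hd hY k (leqnn k).
have eS : S22 X Y = #|[set f : {ffun 'I_m -> 'I_n} | [forall i : 'I_k, (i < k)%N ==> (f @: X i != Y i)]]|.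
  rewrite /S22; apply: eq_card => f; rewrite !inE.
  by apply: eq_forallb => i; rewrite ltn_ord.
have e2 : (S22 X Y)%:Z = (n%:Z) ^+ (m - 2 * k) * ((n%:Z) ^+ 2 - 2) ^+ k.
  apply: (@mulIf _ ((n%:Z) ^+ (2 * k))).
    by rewrite expf_neq0 // -lt0n.
  rewrite eS h -mulrA [_ ^+ k * _]mulrC mulrA -exprD subnK //.
split=> //; rewrite e2.
rewrite exprDn big_distrr /=.
apply: eq_bigr => i _.
have ik : (i <= k)%N by rewrite -ltnS ltn_ord.
rewrite -mulr_natr -exprM natz.
have -> : (m - 2 * i = (m - 2 * k) + 2 * (k - i))%N by lia.
rewrite exprD; ring.
Qed.
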